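(* Let $P,Q$ be finite posets and $R$ an indecomposable commutative unital ring. If $I^3(P,R)$ and $I^3(Q,R)$ are isomorphic as $R$-algebras (via an $R$-linear multiplicative bijection), then $P$ and $Q$ are isomorphic posets.
   Context: A commutative ring $R$ is indecomposable if its only idempotents are $0$ and $1$. For a finite poset $P$, let $P^3_\le=\{(x,y,z)\in P^3: x\le y\le z\}$. The third partial flag incidence algebra $I^3(P,R)$ is the $R$-module of all functions $f:P^3_\le\to R$ (pointwise operations) with the (non-associative) multiplication $(fg)(x_1,x_2,x_3)=\sum f(x_1,y_1,y_2)\,g(y_1,y_2,x_3)$, the sum over all $y_1,y_2$ with $x_1\le y_1\le x_2\le y_2\le x_3$. *)

(* Defs.v *)
From HB Require Import structures.
From mathcomp Require Import all_boot all_order all_algebra.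
Set Implicit Arguments. Unset Strict Implicit. Unset Printing Implicit Defensive.
Import Order.TTheory GRing.Theory.
Local Open Scope order_scope.

Section Flag.
Variables (d : Order.disp_t) (P : finPOrderType d).

Definition flag3_pred : pred (P * P * P) :=
  fun t => (t.1.1 <= t.1.2) && (t.1.2 <= t.2).

Definition flag3 := {t : P * P * P | flag3_pred t}.

Variable R : comNzRingType.

Definition I3 := {ffun flag3 -> R^o}.

Definition ext3 (f : I3) (t : P * P * P) : R :=
  match @insub _ flag3_pred flag3 t with Some s => f s | None => 0%R end.

Definition mul3 (f g : I3) : I3 :=
  [ffun s : flag3 =>
     (\sum_(y1 : P) \sum_(y2 : P |
         [&& (val s).1.1 <= y1, y1 <= (val s).1.2, (val s).1.2 <= y2
           & y2 <= (val s).2]%O)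
        ext3 f ((val s).1.1, y1, y2) * ext3 g (y1, y2, (val s).2))%R].
End Flag.

HB.instance Definition _ (d : Order.disp_t) (P : finPOrderType d)
  (R : comNzRingType) := GRing.Lmodule.copy (I3 P R) {ffun flag3 P -> R^o}.


Definition indecomposable (R : comNzRingType) : Prop :=
  forall e : R, (e * e = e)%R -> e = 0%R \/ e = 1%R.

Definition poset_iso (d1 d2 : Order.disp_t)
  (P : finPOrderType d1) (Q : finPOrderType d2) : Prop :=
  exists h : P -> Q, bijective h /\ {mono h : x y / x <= y}.

(* Main.v *)
Require Import Defs.
From HB Require Import structures.
From mathcomp Require Import all_boot all_order all_algebra.
Set Implicit Arguments. Unset Strict Implicit. Unset Printing Implicit Defensive.
Import Order.TTheory GRing.Theory.
Local Open Scope ring_scope.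

Section Basic.
Variables (d : Order.disp_t) (P : finPOrderType d) (R : comNzRingType).
Implicit Types (f g h : I3 P R).

Definition dlt (t : P * P * P) : I3 P R := [ffun s => ((val s == t)%:R : R)].

Lemma ext3_val f (s : flag3 P) : ext3 f (val s) = f s.
Proof. by rewrite /ext3 valK. Qed.

Lemma ext3_flag f u (Hu : flag3_pred u) : ext3 f u = f (Sub u Hu).
Proof. by rewrite /ext3 insubT. Qed.

Lemma ext3_nflag f u : ~~ flag3_pred u -> ext3 f u = 0.
Proof. by move=> Hu; rewrite /ext3 (@insubN _ _ (flag3 P) u Hu). Qed.

Lemma ext3D f g u : ext3 (f + g) u = ext3 f u + ext3 g u.
Proof. rewrite /ext3; case: insubP => [s _ _|_]; by rewrite ?ffunE ?addr0. Qed.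

Lemma ext3Z (c : R) f u : ext3 (c *: f) u = c * ext3 f u.
Proof. rewrite /ext3; case: insubP => [s _ _|_]; by rewrite ?ffunE ?mulr0. Qed.

Lemma ext30 u : ext3 (0 : I3 P R) u = 0.
Proof. rewrite /ext3; case: insubP => [s _ _|_]; by rewrite ?ffunE. Qed.

Lemma ext3_dlt t u : ext3 (dlt t) u = (flag3_pred u && (u == t))%:R.
Proof.
rewrite /ext3; case: insubP => [s _ <-|/negbTE ->] //; by rewrite ffunE (valP s).
Qed.

Lemma ext3_mul f g u : ext3 (mul3 f g) u =
  if flag3_pred u then
  (\sum_(y1 : P) \sum_(y2 : P |
         [&& u.1.1 <= y1, y1 <= u.1.2, u.1.2 <= y2 & y2 <= u.2]%O)
        ext3 f (u.1.1, y1, y2) * ext3 g (y1, y2, u.2)) else 0.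
Proof.
rewrite /ext3; case: insubP => [s _ <-|/negbTE ->] //; by rewrite ffunE (valP s).
Qed.


Lemma sum_pick2 (X : R) (a b : P) :
  \sum_(y1 : P) \sum_(y2 : P) (if (y1 == a) && (y2 == b) then X else 0) = X.
Proof.
rewrite (bigD1 a) //= (bigD1 b) //= !eqxx /=.
rewrite [X in _ + X + _]big1 => [|y2 Hy2]; last by rewrite (negbTE Hy2).
rewrite addr0 [X in _ + X]big1 ?addr0 // => y1 Hy1.
by apply: big1 => y2 _; rewrite (negbTE Hy1).
Qed.

Lemma ext3_mul_dlt h t u : ext3 (mul3 h (dlt t)) u =
  if [&& u.2 == t.2, u.1.1 <= t.1.1, t.1.1 <= u.1.2, u.1.2 <= t.1.2
       & t.1.2 <= u.2]%O
  then ext3 h (u.1.1, t.1.1, t.1.2) else 0.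
Proof.
case: t => [[t1 t2] t3]; case: u => [[u1 u2] u3] /=.
rewrite ext3_mul /=.
case Hf: (flag3_pred (u1, u2, u3)); last first.
  case: ifP => // /and5P [_ h1 h2 h3 h4].
  move: Hf; rewrite /flag3_pred /= (le_trans h1 h2) /=.
  by rewrite (le_trans h3 h4).
rewrite -[RHS](sum_pick2 _ t1 t2).
apply: eq_bigr => y1 _; rewrite big_mkcond; apply: eq_bigr => y2 _.
rewrite ext3_dlt /flag3_pred /=.
case: (eqVneq y1 t1) => [->|ne1]; last first.
  by rewrite !xpair_eqE (negbTE ne1) /= andbF mulr0; case: ifP.
case: (eqVneq y2 t2) => [->|ne2]; last first.
  by rewrite !xpair_eqE (negbTE ne2) /= !andbF /= mulr0; case: ifP.
rewrite /= !xpair_eqE !eqxx /=.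
case: (eqVneq u3 t3) => [->|ne3] /=; last by rewrite andbF mulr0; case: ifP.
case H: [&& _, _, _ & _] => //.
move/and4P: H => [h1 h2 h3 h4].
by rewrite (le_trans h2 h3) h4 mulr1.
Qed.


Lemma I3_ext f g : (forall u, ext3 f u = ext3 g u) -> f = g.
Proof. by move=> H; apply/ffunP => s; rewrite -!ext3_val H. Qed.

Ltac dec_eq :=
  repeat (match goal with |- context[?x == ?y] =>
     lazymatch x with y => rewrite eqxx | _ => case: (eqVneq x y) => [?|?]; [subst|] end end).

Ltac bsolve :=
  rewrite ?xpair_eqE; dec_eq;
  repeat (match goal with H : is_true (?x != ?y) |- _ =>
      rewrite ?(negbTE H); move: H; rewrite eq_le end);
  rewrite ?lexx /=;
  repeat (match goal with |- context[(?x <= ?y)%O] => case: (x <= y)%O end);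
  by rewrite /= ?mulr0 ?mulr1.

Lemma mul_dd z : mul3 (dlt (z,z,z)) (dlt (z,z,z)) = dlt (z,z,z).
Proof.
apply: I3_ext => [[[u1 u2] u3]].
rewrite ext3_mul_dlt !ext3_dlt /flag3_pred /=.
bsolve.
Qed.


Ltac mulsolve := apply: I3_ext => [[[u1 u2] u3]];
  rewrite ext3_mul_dlt ?ext30 !ext3_dlt /flag3_pred /=; bsolve.

Lemma mul_dd' z z' : z != z' -> mul3 (dlt (z,z,z)) (dlt (z',z',z')) = 0.
Proof. move=> nz; mulsolve. Qed.

Lemma mul_c1 a b : (a <= b)%O -> mul3 (dlt (a,b,b)) (dlt (b,b,b)) = dlt (a,b,b).
Proof. move=> ab; mulsolve. Qed.

Lemma mul_c2 a b : a != b -> mul3 (dlt (b,b,b)) (dlt (a,b,b)) = 0.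
Proof. move=> ab; mulsolve. Qed.

Lemma mul_d1 a e : (a <= e)%O -> mul3 (dlt (a,a,a)) (dlt (a,a,e)) = dlt (a,a,e).
Proof. move=> ae; mulsolve. Qed.

Lemma mul_d2 a e : a != e -> mul3 (dlt (a,a,e)) (dlt (a,a,a)) = 0.
Proof. move=> ae; mulsolve. Qed.

Lemma mul_e a b e : (a <= b)%O -> (b <= e)%O ->
  mul3 (dlt (a,b,b)) (dlt (b,b,e)) = dlt (a,b,e).
Proof. move=> ab be; mulsolve. Qed.


Lemma scRo (a : R) (b : R^o) : a *: b = a * b.
Proof. by []. Qed.

Lemma decomp f : f = \sum_(s : flag3 P) f s *: dlt (val s).
Proof.
apply/ffunP => s'; rewrite sum_ffunE (bigD1 s') //= !ffunE scRo eqxx mulr1.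
rewrite big1 ?addr0 // => s ns; rewrite !ffunE scRo.
by rewrite (inj_eq val_inj) eq_sym (negbTE ns) mulr0.
Qed.

Lemma classify (chi : I3 P R -> R)
  (HD : forall f g, chi (f + g) = chi f + chi g)
  (HZ : forall (c : R) f, chi (c *: f) = c * chi f)
  (HM : forall f g, chi (mul3 f g) = chi f * chi g)
  (Hind : indecomposable R) (Hnz : exists f, chi f != 0) :
  exists x : P, forall f, chi f = ext3 f (x,x,x).
Proof.
have chi0 : chi 0 = 0 by rewrite -(scale0r (0 : I3 P R)) HZ mul0r.
pose c t := chi (dlt t).
have Hexp f : chi f = \sum_(s : flag3 P) f s * c (val s).
  rewrite {1}(decomp f) (big_morph chi HD chi0).
  by apply: eq_bigr => s _; rewrite HZ.
have cdd z : c (z,z,z) = 0 \/ c (z,z,z) = 1.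
  by apply: Hind; rewrite /c -HM mul_dd.
have cdd' z z' : z != z' -> c (z,z,z) * c (z',z',z') = 0.
  by move=> nz; rewrite /c -HM mul_dd'.
have c1 a b : (a <= b)%O -> a != b -> c (a,b,b) = 0.
  move=> ab nab; rewrite /c -(mul_c1 ab) HM mulrC -HM mul_c2 //.
have c2 a e : (a <= e)%O -> a != e -> c (a,a,e) = 0.
  move=> ae nae; rewrite /c -(mul_d1 ae) HM mulrC -HM mul_d2 //.
have coff (s : flag3 P) : (val s).1.1 != (val s).1.2 \/ (val s).1.2 != (val s).2 ->
     c (val s) = 0.
  case: s => [[[a b] e]] /= /andP [/= ab /= be] /=.
  case: (eqVneq a b) => [E|nab] /=.
    subst b; by case=> [//|nae]; rewrite (c2 _ _ be).
  move=> _; rewrite /c -(mul_e ab be) HM.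
  by have := c1 _ _ ab nab; rewrite /c => ->; rewrite mul0r.
have diag (s : flag3 P) : c (val s) != 0 -> val s = ((val s).2, (val s).2, (val s).2).
  move=> Hs.
  case: (eqVneq (val s).1.1 (val s).1.2) => [E1|n1]; last by move: Hs; rewrite coff ?eqxx //; left.
  case: (eqVneq (val s).1.2 (val s).2) => [E2|n2]; last by move: Hs; rewrite coff ?eqxx //; right.
  by move: E1 E2; case: (val s) => [[a b] e] /= -> ->.
have [s Hs] : exists s : flag3 P, c (val s) != 0.
  case: (pickP (fun s : flag3 P => c (val s) != 0)) => [s Hs|H0]; first by exists s.
  case: Hnz => f0; rewrite Hexp big1 ?eqxx // => s _.
  by move: (H0 s) => /= /negbFE /eqP ->; rewrite mulr0.
set x := (val s).2.
have Ex := diag s Hs.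
have c1x : c (x,x,x) = 1.
  by case: (cdd x) => // H; move: Hs; rewrite Ex -/x H eqxx.
exists x => f.
rewrite Hexp (bigD1 s) //= big1 => [|s' ns'].
  by rewrite addr0 Ex -/x c1x mulr1 -Ex ext3_val.
case: (eqVneq (c (val s')) 0) => [->|Hs']; first by rewrite mulr0.
have Ex' := diag s' Hs'.
case: (eqVneq (val s').2 x) => [E|ne].
  by move: ns'; rewrite -(inj_eq val_inj) Ex Ex' E eqxx.
by move: Hs'; rewrite Ex' -[c _]mulr1 -c1x cdd' ?eqxx.
Qed.


Definition Crel (x y : P) := forall f g : I3 P R,
  ext3 f (x,x,x) = 1 -> ext3 g (y,y,y) = 1 ->
  exists k1 k2 k3 k4 : I3 P R,
    mul3 (mul3 (mul3 (mul3 (mul3 f k1) k2) k3) k4) g != 0.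

Lemma row_mul h k a : (forall b c, ext3 h (a,b,c) = 0) ->
  forall b c, ext3 (mul3 h k) (a,b,c) = 0.
Proof.
move=> H b c; rewrite ext3_mul /=; case: ifP => // _.
by apply: big1 => y1 _; apply: big1 => y2 _; rewrite H mul0r.
Qed.

Lemma Crel_le x y : Crel x y -> (x <= y)%O.
Proof.
move=> HC.
have dd z : ext3 (dlt (z,z,z)) (z,z,z) = 1.
  by rewrite ext3_dlt /flag3_pred /= lexx eqxx.
have [k1 [k2 [k3 [k4 Hnz]]]] := HC (dlt (x,x,x)) (dlt (y,y,y)) (dd x) (dd y).
apply/negPn/negP => nxy; move/negP: Hnz; apply; apply/eqP.
apply: I3_ext => [[[u1 u2] u3]]; rewrite ext30 ext3_mul_dlt /=.
case: ifP => // /and5P [_ u1y _ _ _].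
case: (eqVneq u1 x) => [E|ne]; first by move: u1y; rewrite E (negbTE nxy).
do 4 apply: row_mul.
move=> b c; rewrite ext3_dlt !xpair_eqE (negbTE ne) /=.
by rewrite andbF.
Qed.

Lemma le_Crel x y : (x <= y)%O -> Crel x y.
Proof.
move=> xy f g Hf Hg.
exists (dlt (x,x,x)), (dlt (x,x,y)), (dlt (x,y,y)), (dlt (y,y,y)).
set p4 := mul3 (mul3 (mul3 (mul3 f _) _) _) _.
have Hp4 b c : ext3 p4 (x,b,c) = ((b == y) && (c == y))%:R.
  rewrite /p4 !ext3_mul_dlt /= !eqxx !lexx xy /= Hf.
  case: (eqVneq b y) => [->|nb]; case: (eqVneq c y) => [->|nc];
    rewrite ?eqxx ?lexx ?andbT ?andbF //=.
  by move: nb; rewrite eq_le andbC => /negbTE ->.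
apply/negP => /eqP H0.
have := ext30 (x,y,y); rewrite -H0 ext3_mul /flag3_pred /= xy lexx /=.
suff -> : (\sum_y1 \sum_(y2 | [&& (x <= y1)%O, (y1 <= y)%O, (y <= y2)%O & (y2 <= y)%O])
     ext3 p4 (x, y1, y2) * ext3 g (y1, y2, y)) =
     \sum_y1 \sum_y2 (if (y1 == y) && (y2 == y) then (1 : R) else 0).
  by rewrite sum_pick2 => /eqP; rewrite oner_eq0.
apply: eq_bigr => y1 _; rewrite big_mkcond; apply: eq_bigr => y2 _.
rewrite Hp4.
case: (eqVneq y1 y) => [->|n1]; case: (eqVneq y2 y) => [->|n2];
  rewrite ?eqxx ?lexx ?xy /= ?mul1r ?Hg ?mul0r //; by case: ifP.
Qed.

End Basic.
Arguments dlt {d P R} t.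

Section Diag.
Variables (d : Order.disp_t) (P : finPOrderType d) (R : comNzRingType).
Lemma ext3_mul_diag (f g : I3 P R) z :
  ext3 (mul3 f g) (z,z,z) = ext3 f (z,z,z) * ext3 g (z,z,z).
Proof.
rewrite ext3_mul /flag3_pred /= lexx /=.
rewrite -[RHS](sum_pick2 _ z z).
apply: eq_bigr => y1 _; rewrite big_mkcond; apply: eq_bigr => y2 _ /=.
case: (eqVneq y1 z) => [->|n1]; case: (eqVneq y2 z) => [->|n2];
  rewrite ?lexx ?eqxx /= ?andbF ?mulr0 //.
- by move: n2; rewrite eq_le andbC => /negbTE ->.
- by move: n1; rewrite eq_le andbC !andbA; case: (_ && _).
- by move: n1; rewrite eq_le andbC !andbA; case: (_ && _).
Qed.

End Diag.

Section Two.
Variables (d1 d2 : Order.disp_t) (P : finPOrderType d1) (Q : finPOrderType d2)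
  (R : comNzRingType).

Lemma char_of (phi : I3 P R -> I3 Q R) (psi : I3 Q R -> I3 P R)
  (Hc2 : cancel psi phi)
  (HD : forall f g, phi (f + g) = phi f + phi g)
  (HZ : forall (c : R) f, phi (c *: f) = c *: phi f)
  (HM : forall f g, phi (mul3 f g) = mul3 (phi f) (phi g))
  (Hind : indecomposable R) (y : Q) :
  exists x : P, forall f, ext3 (phi f) (y,y,y) = ext3 f (x,x,x).
Proof.
apply: (classify (chi := fun f => ext3 (phi f) (y,y,y))) => //.
- by move=> f g; rewrite HD ext3D.
- by move=> c f; rewrite HZ ext3Z.
- by move=> f g; rewrite HM ext3_mul_diag.
- exists (psi (dlt (y,y,y))); rewrite Hc2 ext3_dlt /flag3_pred /= lexx eqxx.
  by rewrite oner_eq0.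
Qed.

Lemma transport (phi : I3 P R -> I3 Q R) (psi : I3 Q R -> I3 P R)
  (Hc2 : cancel psi phi)
  (HM : forall f g, phi (mul3 f g) = mul3 (phi f) (phi g))
  (H0 : phi 0 = 0) (x y : P) (x' y' : Q)
  (Hx : forall f, ext3 (phi f) (x',x',x') = ext3 f (x,x,x))
  (Hy : forall f, ext3 (phi f) (y',y',y') = ext3 f (y,y,y)) :
  Crel R x' y' -> Crel R x y.
Proof.
move=> HC f g Hf Hg.
have [k1 [k2 [k3 [k4 Hnz]]]] := HC (phi f) (phi g) (etrans (Hx f) Hf) (etrans (Hy g) Hg).
exists (psi k1), (psi k2), (psi k3), (psi k4).
apply: contra Hnz => /eqP E.
by rewrite -E !HM !Hc2 in H0; rewrite -H0.
Qed.

End Two.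

Theorem theorem3p5 (d1 d2 : Order.disp_t)
  (P : finPOrderType d1) (Q : finPOrderType d2) (R : comNzRingType) :
  indecomposable R ->
  (exists phi : {linear I3 P R -> I3 Q R},
      bijective phi /\
      forall f g : I3 P R, phi (mul3 f g) = mul3 (phi f) (phi g)) ->
  poset_iso P Q.
Proof.
move=> Hind [phi [[psi Hc1 Hc2] HM]].
have HD f g : phi (f + g) = phi f + phi g by rewrite linearD.
have HZ (c : R) f : phi (c *: f) = c *: phi f by rewrite linearZ.
have H0 : phi 0 = 0 by rewrite linear0.
have iD f g : psi (f + g) = psi f + psi g.
  by apply: (can_inj Hc1); rewrite HD !Hc2.
have iZ (c : R) f : psi (c *: f) = c *: psi f.
  by apply: (can_inj Hc1); rewrite HZ !Hc2.
have iM f g : psi (mul3 f g) = mul3 (psi f) (psi g).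
  by apply: (can_inj Hc1); rewrite HM !Hc2.
have i0 : psi 0 = 0 by apply: (can_inj Hc1); rewrite Hc2 H0.
pose Rel (x : P) (y : Q) := forall f, ext3 (phi f) (y,y,y) = ext3 f (x,x,x).
have Rx x : exists y, Rel x y.
  have [y Hy] := char_of Hc1 iD iZ iM Hind x.
  by exists y => f; rewrite -{2}(Hc1 f) Hy.
have Ry y : exists x, Rel x y by apply: (char_of Hc2 HD HZ HM Hind y).
have [h Hh] := fin_all_exists Rx.
have [h' Hh'] := fin_all_exists Ry.
have u1 x y y' : Rel x y -> Rel x y' -> y = y'.
  move=> H1 H2; have := H1 (psi (dlt (y,y,y))); rewrite -H2 Hc2 !ext3_dlt.
  rewrite /flag3_pred /= lexx eqxx /= !xpair_eqE.
  by case: (eqVneq y' y) => [//|ne]; rewrite !andbF /= => /eqP; rewrite ?oner_eq0 // eq_sym oner_eq0.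
have u2 x x' y : Rel x y -> Rel x' y -> x = x'.
  move=> H1 H2; have := H1 (dlt (x,x,x)); rewrite H2 !ext3_dlt.
  rewrite /flag3_pred /= lexx eqxx /= !xpair_eqE.
  by case: (eqVneq x' x) => [//|ne]; rewrite !andbF lexx /= => /eqP; rewrite eq_sym oner_eq0.
exists h; split.
  exists h' => [x|y]; first exact: (u2 _ _ _ (Hh' (h x)) (Hh x)).
  exact: (u1 _ _ _ (Hh (h' y)) (Hh' y)).
move=> x y; apply/idP/idP => H.
  apply: Crel_le; apply: (transport Hc2 HM H0 (Hh x) (Hh y)).
  exact: le_Crel.
have Hx' f : ext3 (psi f) (x,x,x) = ext3 f (h x, h x, h x) by rewrite -Hh Hc2.
have Hy' f : ext3 (psi f) (y,y,y) = ext3 f (h y, h y, h y) by rewrite -Hh Hc2.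
apply: Crel_le; apply: (transport Hc1 iM i0 Hx' Hy').
exact: le_Crel.
Qed.
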